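(* Let $\phi:(\mathcal C,S)\to(\mathcal D,T)$ be an admissible morphism from a finite quasi-schemoid whose underlying category is a groupoid to a basic quasi-schemoid, and let $n^\phi_\sigma$ ($\sigma\in S$) be the integers such that $\#(\phi^{-1}(g)\cap x\sigma)=n^\phi_\sigma$ for all $x\in ob(\mathcal C)$ and $g\in\phi(\sigma)$ with $t(g)=\phi(x)$. Then for all $\pi,\rho\in S$ and $\tau\in T$, $$\sum_{\sigma\in S:\ \phi(\sigma)=\tau}p^\sigma_{\pi\rho}\,n^\phi_\sigma=p^\tau_{\phi(\pi)\phi(\rho)}\,n^\phi_\pi\,n^\phi_\rho .$$
   Context: Write $s(f),t(f)$ for source and target. A quasi-schemoid is a pair $(\mathcal C,S)$ with $\mathcal C$ a small category and $S$ a partition of $mor(\mathcal C)$ into nonempty blocks such that for all $\sigma,\tau,\mu\in S$ and $f,g\in\mu$ the sets $\{(a,b)\in\sigma\times\tau: s(a)=t(b), a\circ b=f\}$ and the analogous set for $g$ have equal cardinality, denoted $p^\mu_{\sigma\tau}$. It is finite if $mor(\mathcal C)$ is finite; unital if every block meeting $\{1_x\}$ is contained in it; basic if unital and $\mathcal C$ is a groupoid. A morphism of quasi-schemoids $\phi$ is a functor such that each $\phi(\sigma)$ lies in a unique block of the target, also denoted $\phi(\sigma)$. $\phi$ is admissible if for every $x\in ob(\mathcal C)$, $\sigma\in S$ and $g\in\phi(\sigma)$ with $t(g)=\phi(x)$ there exists $f\in\sigma$ with $t(f)=x$ and $\phi(f)=g$. $x\sigma=\{f\in\sigma:t(f)=x\}$;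 the integers $n^\phi_\sigma$ exist and are positive under these hypotheses. *)

(* Defs.v *)
From mathcomp Require Import all_boot.
Set Implicit Arguments. Unset Strict Implicit. Unset Printing Implicit Defensive.

Record category (O M : Type) := Category {
  src : M -> O;
  tgt : M -> O;
  idm : O -> M;
  comp : M -> M -> M;
  src_idm : forall x, src (idm x) = x;
  tgt_idm : forall x, tgt (idm x) = x;
  src_comp : forall a b, src a = tgt b -> src (comp a b) = src b;
  tgt_comp : forall a b, src a = tgt b -> tgt (comp a b) = tgt a;
  comp_idl : forall f, comp (idm (tgt f)) f = f;
  comp_idr : forall f, comp f (idm (src f)) = f;
  comp_assoc : forall a b c, src a = tgt b -> src b = tgt c ->
    comp a (comp b c) = comp (comp a b) c
}.

(* A partition S of mor(C) into nonempty blocks is encoded by a surjective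
   labelling lab : M -> L; blocks are the fibres of lab, indexed by L. *)

Definition comp_pairs (O M L : Type) (C : category O M) (lab : M -> L)
  (sigma tau : L) (f : M) : M * M -> Prop :=
  fun ab => [/\ lab ab.1 = sigma, lab ab.2 = tau,
               src C ab.1 = tgt C ab.2 & comp C ab.1 ab.2 = f].

Definition same_card (T : Type) (A B : T -> Prop) : Prop :=
  exists h : {x | A x} -> {x | B x}, bijective h.

Definition quasi_schemoid (O M L : Type) (C : category O M) (lab : M -> L) :=
  (forall mu : L, exists f, lab f = mu) /\
  (forall sigma tau mu f g, lab f = mu -> lab g = mu ->
     same_card (comp_pairs C lab sigma tau f) (comp_pairs C lab sigma tau g)).

Definition unital (O M L : Type) (C : category O M) (lab : M -> L) :=
  forall x f, lab f = lab (idm C x) -> exists y, f = idm C y.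

Definition groupoid (O M : Type) (C : category O M) :=
  forall f, exists g, [/\ src C g = tgt C f, tgt C g = src C f,
                        comp C g f = idm C (src C f) &
                        comp C f g = idm C (tgt C f)].

Definition basic (O M L : Type) (C : category O M) (lab : M -> L) :=
  [/\ quasi_schemoid C lab, unital C lab & groupoid C].

Definition functor (CO CM DO DM : Type) (C : category CO CM) (D : category DO DM)
  (Fo : CO -> DO) (Fm : CM -> DM) :=
  [/\ forall f, src D (Fm f) = Fo (src C f),
      forall f, tgt D (Fm f) = Fo (tgt C f),
      forall x, Fm (idm C x) = idm D (Fo x) &
      forall a b, src C a = tgt C b -> Fm (comp C a b) = comp D (Fm a) (Fm b)].

(* Flab sigma is the block of T containing phi(sigma). *)
Definition qs_morphism (CO CM SC DO DM TD : Type)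
  (C : category CO CM) (labC : CM -> SC) (D : category DO DM) (labD : DM -> TD)
  (Fo : CO -> DO) (Fm : CM -> DM) (Flab : SC -> TD) :=
  functor C D Fo Fm /\ (forall f, labD (Fm f) = Flab (labC f)).

Definition admissible (CO CM SC DO DM TD : Type)
  (C : category CO CM) (labC : CM -> SC) (D : category DO DM) (labD : DM -> TD)
  (Fo : CO -> DO) (Fm : CM -> DM) (Flab : SC -> TD) :=
  forall (x : CO) (sigma : SC) (g : DM), labD g = Flab sigma -> tgt D g = Fo x ->
    exists f, [/\ labC f = sigma, tgt C f = x & Fm f = g].

Definition p_at (O : eqType) (M : finType) (L : eqType) (C : category O M)
  (lab : M -> L) (sigma tau : L) (f : M) : nat :=
  #|[set ab : M * M | [&& lab ab.1 == sigma, lab ab.2 == tau,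
                          src C ab.1 == tgt C ab.2 & comp C ab.1 ab.2 == f]]|.

(* p^mu_{sigma tau}, computed at some f in mu (0 if mu were empty). *)
Definition pnum (O : eqType) (M : finType) (L : eqType) (C : category O M)
  (lab : M -> L) (mu sigma tau : L) : nat :=
  if [pick f | lab f == mu] is Some f then p_at C lab sigma tau f else 0.

(* Main.v *)
Require Import Defs.
From mathcomp Require Import all_boot.
From Stdlib Require Import ProofIrrelevance ClassicalDescription Classical.
Set Implicit Arguments. Unset Strict Implicit. Unset Printing Implicit Defensive.

Lemma sum_partition_seq (I : finType) (J : eqType) (P : pred I) (key : I -> J)
  (l : seq J) (F : I -> nat) : uniq l -> (forall i, P i -> key i \in l) ->
  \sum_(i | P i) F i = \sum_(j <- l) \sum_(i | P i && (key i == j)) F i.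
Proof.
move=> ul kl.
rewrite -(exchange_big_dep predT) //=.
apply: eq_bigr => i Pi.
rewrite big_const_seq.
have -> : count (fun j => key i == j) l = 1.
  rewrite (eq_count (a2 := pred1 (key i))); last by move=> j /=; rewrite eq_sym.
  by rewrite count_uniq_mem // kl.
by rewrite /= addn0.
Qed.

Lemma sig_eq (T : Type) (P : T -> Prop) (s1 s2 : sig P) : proj1_sig s1 = proj1_sig s2 -> s1 = s2.
Proof.
case: s1 => x1 p1; case: s2 => x2 p2 /= e; subst x2.
by rewrite (proof_irrelevance _ p1 p2).
Qed.

Lemma transfer (T : eqType) (A B : T -> Prop) (l : seq T) : uniq l ->
  (forall x, x \in l <-> A x) -> same_card B A ->
  exists l', [/\ uniq l', (forall x, x \in l' <-> B x) & size l' = size l].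
Proof.
move=> ul hl [h [k hk kh]].
pose F y := match excluded_middle_informative (A y) with
            | left p => proj1_sig (k (exist _ y p)) | right _ => y end.
exists (map F l); split; last by rewrite size_map.
- rewrite map_inj_in_uniq // => y1 y2 /hl a1 /hl a2.
  rewrite /F; case: excluded_middle_informative => // p1;
  case: excluded_middle_informative => // p2 e.
  have := congr1 h (sig_eq e); rewrite !kh => e2.
  by have := congr1 (@proj1_sig _ _) e2.
- move=> x; split.
  + case/mapP => y /hl ay ->; rewrite /F.
    case: excluded_middle_informative => // p.
    exact: proj2_sig.
  + move=> bx; apply/mapP.
    pose s := h (exist _ x bx).
    exists (proj1_sig s); first by apply/hl; exact: proj2_sig.
    rewrite /F; case: excluded_middle_informative => [p|]; last by move: (proj2_sig s).
    have -> : exist _ (proj1_sig s) p = s by apply: sig_eq.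
    by rewrite hk.
Qed.

Lemma same_card_card (T : finType) (a b : pred T) :
  same_card (fun x => a x) (fun x => b x) -> #|a| = #|b|.
Proof.
case=> h hb.
have := bij_eq_card hb.
rewrite !card_sig.
by [].
Qed.

Lemma same_card_equiv (T : Type) (A B A' B' : T -> Prop) :
  (forall x, A x <-> A' x) -> (forall x, B x <-> B' x) ->
  same_card A B -> same_card A' B'.
Proof.
move=> eA eB [h [k hk kh]].
pose toA (s : sig A') : sig A := exist _ (proj1_sig s) (proj2 (eA _) (proj2_sig s)).
pose ofA (s : sig A) : sig A' := exist _ (proj1_sig s) (proj1 (eA _) (proj2_sig s)).
pose toB (s : sig B') : sig B := exist _ (proj1_sig s) (proj2 (eB _) (proj2_sig s)).
pose ofB (s : sig B) : sig B' := exist _ (proj1_sig s) (proj1 (eB _) (proj2_sig s)).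
exists (fun s => ofB (h (toA s))); exists (fun s => ofA (k (toB s))).
- move=> s; apply: sig_eq => /=.
  have -> : toB (ofB (h (toA s))) = h (toA s) by apply: sig_eq.
  by rewrite hk.
- move=> s; apply: sig_eq => /=.
  have -> : toA (ofA (k (toB s))) = k (toB s) by apply: sig_eq.
  by rewrite kh.
Qed.

Lemma same_card_cards (T : finType) (A B : {set T}) :
  same_card (fun x => x \in A) (fun x => x \in B) -> #|A| = #|B|.
Proof.
move=> h; have := @same_card_card T (mem A) (mem B) h.
by [].
Qed.

Lemma pnum_at (O : eqType) (M : finType) (L : eqType) (C : category O M)
  (lab : M -> L) sigma pi rho f : quasi_schemoid C lab -> lab f = sigma ->
  pnum C lab sigma pi rho = p_at C lab pi rho f.
Proof.
move=> [_ qs] lf; rewrite /pnum.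
case: pickP => [f' /eqP lf'|]; last by move/(_ f); rewrite lf eqxx.
rewrite /p_at; apply: same_card_cards.
apply: same_card_equiv (qs pi rho sigma f' f lf' lf).
- move=> [a b]; rewrite /comp_pairs in_set /=; split.
  + by case=> -> -> -> ->; rewrite !eqxx.
  + by case/and4P => /eqP -> /eqP -> /eqP -> /eqP ->.
- move=> [a b]; rewrite /comp_pairs in_set /=; split.
  + by case=> -> -> -> ->; rewrite !eqxx.
  + by case/and4P => /eqP -> /eqP -> /eqP -> /eqP ->.
Qed.

Lemma main_count (CO : eqType) (CM : finType) (SC : finType)
  (C : category CO CM) (labC : CM -> SC)
  (DO : Type) (DM : eqType) (TD : eqType)
  (D : category DO DM) (labD : DM -> TD)
  (Fo : CO -> DO) (Fm : CM -> DM) (Flab : SC -> TD) (n : SC -> nat) :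
  quasi_schemoid C labC ->
  qs_morphism C labC D labD Fo Fm Flab ->
  admissible C labC D labD Fo Fm Flab ->
  (forall (x : CO) (sigma : SC) (g : DM), labD g = Flab sigma -> tgt D g = Fo x ->
     #|[set f : CM | [&& labC f == sigma, tgt C f == x & Fm f == g]]| = n sigma) ->
  forall (pi rho : SC) (tau : TD) (g0 : DM) (x0 : CO), labD g0 = tau -> tgt D g0 = Fo x0 ->
    exists l : seq (DM * DM),
      [/\ uniq l,
          (forall ab, ab \in l <-> comp_pairs D labD (Flab pi) (Flab rho) g0 ab) &
          \sum_(sigma : SC | Flab sigma == tau) pnum C labC sigma pi rho * n sigma
            = size l * n pi * n rho].
Proof.
move=> qsC [[Fsrc Ftgt Fid Fcomp] Flabel] adm hn pi rho tau g0 x0 lg0 tg0.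
pose P := fun ab : CM * CM => [&& labC ab.1 == pi, labC ab.2 == rho,
   src C ab.1 == tgt C ab.2, tgt C ab.1 == x0 & Fm (Defs.comp C ab.1 ab.2) == g0].
pose key := fun ab : CM * CM => (Fm ab.1, Fm ab.2).
pose l := undup (map key (enum P)).
have cpl : forall p, p \in l <-> comp_pairs D labD (Flab pi) (Flab rho) g0 p.
  move=> [a' b']; rewrite mem_undup; split.
  - case/mapP => [[a b]]; rewrite mem_enum /P /= => /and5P[/eqP la /eqP lb /eqP sab /eqP ta /eqP fab] [-> ->].
    split; rewrite ?Flabel ?la ?lb // ?Fsrc ?Ftgt ?sab //.
    by rewrite -Fcomp.
  - case=> /= la lb sab cab.
    have ta : tgt D a' = Fo x0 by rewrite -tg0 -cab tgt_comp.
    case: (adm x0 pi a' la ta) => a [laa taa faa].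
    have tb : tgt D b' = Fo (src C a) by rewrite -sab -faa Fsrc.
    case: (adm (src C a) rho b' lb tb) => b [lbb tbb fbb].
    apply/mapP; exists (a, b); last by rewrite /key /= faa fbb.
    rewrite mem_enum unfold_in /P /= laa lbb tbb taa !eqxx /= Fcomp ?tbb // faa fbb cab.
    by rewrite eqxx.
exists l; split => //; first exact: undup_uniq.
transitivity (\sum_(ab | P ab) 1).
  symmetry.
  rewrite (partition_big (fun ab => Defs.comp C ab.1 ab.2)
             (fun f => (tgt C f == x0) && (Fm f == g0))); last first.
    move=> [a b] /and5P[_ _ /eqP sab /eqP ta /eqP fab] /=.
    by rewrite tgt_comp // ta fab !eqxx.
  transitivity (\sum_(f | (tgt C f == x0) && (Fm f == g0)) pnum C labC (labC f) pi rho).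
    apply: eq_bigr => f /andP[/eqP tf /eqP ff].
    rewrite (@pnum_at _ _ _ C labC (labC f) pi rho f qsC erefl) /p_at -sum1_card.
    apply: eq_bigl => -[a b]; rewrite inE /P /=; apply/idP/idP.
    - by case/andP => /and5P[-> -> -> _ _] ->.
    - case/and4P => -> -> /eqP sab /eqP cab.
      by rewrite sab -tf -ff -cab tgt_comp // !eqxx.
  rewrite (partition_big labC (fun s => Flab s == tau)); last first.
    by move=> f /andP[_ /eqP ff]; rewrite -Flabel ff lg0.
  apply: eq_bigr => s /eqP fs.
  transitivity (\sum_(f | ((tgt C f == x0) && (Fm f == g0)) && (labC f == s)) pnum C labC s pi rho).
    by apply: eq_bigr => f /andP[_ /eqP ->].
  rewrite -(hn x0 s g0) ?lg0 ?fs // mulnC -sum_nat_const.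
  by apply: eq_bigl => f; rewrite inE andbC.
rewrite (@sum_partition_seq _ _ P key l); first last.
- by move=> i Pi; rewrite mem_undup; apply/mapP; exists i; rewrite ?mem_enum.
- exact: undup_uniq.
have -> : size l * n pi * n rho = \sum_(j <- l) (n pi * n rho).
  by rewrite big_const_seq count_predT -mulnA; elim: (size l) => //= k <-; rewrite mulSn.
rewrite big_seq_cond [RHS]big_seq_cond; apply: eq_bigr => -[a' b'] /andP[/cpl [/= la lb sab cab] _].
transitivity (\sum_(p : CM * CM | [&& labC p.1 == pi, tgt C p.1 == x0 & Fm p.1 == a'] &&
     [&& labC p.2 == rho, tgt C p.2 == src C p.1 & Fm p.2 == b']) 1).
  apply: eq_bigl => -[a b] /=; rewrite /P /key /= xpair_eqE; apply/idP/idP.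
  - case/andP => /and5P[la' lb' sab' ta' fab'] /andP[fa fb].
    by rewrite la' lb' ta' fa fb eq_sym sab'.
  - case/andP => /and3P[la' ta' /eqP fa] /and3P[lb' /eqP tb' /eqP fb].
    rewrite Fcomp; last by rewrite tb'.
    by rewrite fa fb cab la' lb' ta' tb' !eqxx.
rewrite -(pair_big_dep (fun a => [&& labC a == pi, tgt C a == x0 & Fm a == a'])
   (fun a b => [&& labC b == rho, tgt C b == src C a & Fm b == b']) (fun _ _ => 1)) /=.
have ta : tgt D a' = Fo x0 by rewrite -tg0 -cab tgt_comp.
transitivity (\sum_(a | [&& labC a == pi, tgt C a == x0 & Fm a == a']) n rho).
  apply: eq_bigr => a /and3P[_ _ /eqP fa].
  rewrite -(hn (src C a) rho b' lb); last by rewrite -sab -fa Fsrc.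
  by rewrite -sum1_card; apply: eq_bigl => b; rewrite inE.
transitivity (#|[set a | [&& labC a == pi, tgt C a == x0 & Fm a == a']]| * n rho).
  by rewrite -sum_nat_const; apply: eq_bigl => a; rewrite inE.
by rewrite hn.
Qed.

Theorem lemma6p6 (CO : eqType) (CM : finType) (SC : finType)
  (C : category CO CM) (labC : CM -> SC)
  (DO : Type) (DM : eqType) (TD : eqType)
  (D : category DO DM) (labD : DM -> TD)
  (Fo : CO -> DO) (Fm : CM -> DM) (Flab : SC -> TD) (n : SC -> nat) :
  quasi_schemoid C labC -> groupoid C ->
  basic D labD ->
  qs_morphism C labC D labD Fo Fm Flab ->
  admissible C labC D labD Fo Fm Flab ->
  (forall (x : CO) (sigma : SC) (g : DM), labD g = Flab sigma -> tgt D g = Fo x ->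
     #|[set f : CM | [&& labC f == sigma, tgt C f == x & Fm f == g]]| = n sigma) ->
  forall (pi rho : SC) (tau : TD) (g : DM), labD g = tau ->
    exists l : seq (DM * DM),
      [/\ uniq l,
          (forall ab, ab \in l <-> comp_pairs D labD (Flab pi) (Flab rho) g ab) &
          \sum_(sigma : SC | Flab sigma == tau) pnum C labC sigma pi rho * n sigma
            = size l * n pi * n rho].
Proof.
move=> qsC grpC basD morph adm hn pi rho tau g lg.
have [qsD _ grpD] := basD.
have morph' := morph.
case: morph' => [[Fsrc Ftgt Fid Fcomp] Flabel].
case: (classic (exists g0 x0, labD g0 = tau /\ tgt D g0 = Fo x0)) => [[g0 [x0 [lg0 tg0]]] | nog].
  have [l [ul hl hs]] := @main_count CO CM SC C labC DO DM TD D labD Fo Fm Flab n qsC morph adm hn pi rho tau g0 x0 lg0 tg0.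
  have sc := proj2 qsD (Flab pi) (Flab rho) tau g g0 lg lg0.
  have [l' [ul' hl' sz]] := transfer ul hl sc.
  by exists l'; split => //; rewrite sz.
exists [::]; split => //.
  move=> [a' b']; split => //; case=> /= la lb sab cab.
  exfalso; apply: nog.
  have [b'' [sb tb e1 e2]] := grpD b'.
  have e : Defs.comp D g b'' = a'.
    rewrite -cab -comp_assoc // ?sb // e2 -sab.
    exact: comp_idr.
  have [f1 lf1] := proj1 qsC pi.
  have lfa : labD a' = labD (Fm f1) by rewrite la Flabel lf1.
  have sc := proj2 qsD tau (labD b'') (labD a') a' (Fm f1) erefl (esym lfa).
  case: sc => h _.
  have pf : comp_pairs D labD tau (labD b'') a' (g, b'').
    split => //=; by rewrite ?tb -?cab ?src_comp.
  case: (h (exist _ (g, b'') pf)) => [[c d] [/= lc ld scd ccd]].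
  exists c, (tgt C f1); split => //.
  by rewrite -Ftgt -ccd tgt_comp.
rewrite mul0n big1 // => s /eqP fs; exfalso; apply: nog.
have [f lf] := proj1 qsC s.
by exists (Fm f), (tgt C f); rewrite Flabel lf fs Ftgt.
Qed.
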